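(* Let $\mathcal M,\mathcal X,\mathcal Y$ be finite sets, $P_M$ a distribution on $\mathcal M$, $W_{Y|X}$ a channel from $\mathcal X$ to $\mathcal Y$, and $P_X$ any distribution on $\mathcal X$. For every $s\in(0,\tfrac12]$, \[ P_{js}(P_M,W_{Y|X})\le e^{\frac{s}{1-s}\left(H_{1-s}(M)-I^{\uparrow}_{1-s}(X;Y|P_X\times W_{Y|X})\right)} =\Big(\sum_m P_M(m)^{1-s}\Big)^{\frac1{1-s}}\sum_y\Big(\sum_x P_X(x)W_{Y|X}(y|x)^{1-s}\Big)^{\frac1{1-s}}. \]
   Context: A code $\phi=(\mathsf e,\mathsf d)$ consists of $\mathsf e:\mathcal M\to\mathcal X$ and $\mathsf d:\mathcal Y\to\mathcal M$; $P_{js}[\phi|P_M,W_{Y|X}]:=\sum_{m}P_M(m)W_{Y|X}(\{y:\mathsf d(y)\ne m\}|\mathsf e(m))$ and $P_{js}(P_M,W_{Y|X}):=\inf_\phi P_{js}[\phi|P_M,W_{Y|X}]$. $H_{1-s}(M):=\frac1s\log\sum_m P_M(m)^{1-s}$. For $P_{XY}=P_X\times W_{Y|X}$, $I^{\uparrow}_{1-s}(X;Y|P_{XY}):=-\frac{1-s}{s}\log\sum_y\big(\sum_x P_X(x)W_{Y|X}(y|x)^{1-s}\big)^{\frac1{1-s}}$. *)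

(* Defs.v *)
From mathcomp Require Import all_boot.
From Stdlib Require Import Reals.
Set Implicit Arguments. Unset Strict Implicit. Unset Printing Implicit Defensive.
Open Scope R_scope.

Notation "\rsum_ ( i : T ) F" := (\big[Rplus/0]_(i : T) F)
  (at level 41, F at level 41, i, T at level 50) : R_scope.

(* Real power with the convention 0^a = 0 (used for a > 0);
   note Stdlib's Rpower 0 a = 1, which would be wrong here. *)
Definition rpow (x a : R) : R :=
  if Req_EM_T x 0 then 0 else Rpower x a.

Definition is_distr (T : finType) (P : T -> R) : Prop :=
  (forall t, 0 <= P t) /\ \rsum_(t : T) P t = 1.

(* Channel W(y|x), written W x y. *)
Definition is_channel (X Y : finType) (W : X -> Y -> R) : Prop :=
  forall x, is_distr (W x).

Definition Pjs_code (M X Y : finType) (PM : M -> R) (W : X -> Y -> R)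
    (e : {ffun M -> X}) (d : {ffun Y -> M}) : R :=
  \rsum_(m : M) (PM m * \big[Rplus/0]_(y : Y | d y != m) W (e m) y).

(* Infimum over all codes; the set of codes is finite, so the infimum is the
   minimum.  1 is used as the neutral element of Rmin; this is harmless since
   every code error probability is at most 1. *)
Definition Pjs (M X Y : finType) (PM : M -> R) (W : X -> Y -> R) : R :=
  \big[Rmin/1]_(e : {ffun M -> X}) \big[Rmin/1]_(d : {ffun Y -> M})
     Pjs_code PM W e d.

Definition H_renyi (M : finType) (PM : M -> R) (s : R) : R :=
  / s * ln (\rsum_(m : M) rpow (PM m) (1 - s)).

Definition I_up (X Y : finType) (PX : X -> R) (W : X -> Y -> R) (s : R) : R :=
  - ((1 - s) / s) *
    ln (\rsum_(y : Y) rpow (\rsum_(x : X) (PX x * rpow (W x y) (1 - s))) (/ (1 - s))).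

(* Main.v *)
Require Import Defs.
From HB Require Import structures.
From mathcomp Require Import all_boot.
From Stdlib Require Import Reals Lra.
Open Scope R_scope.

Section Inst.
Import Monoid.
Fact RplusA' : associative Rplus. Proof. by move=> *; rewrite Rplus_assoc. Qed.
Fact RmultA' : associative Rmult. Proof. by move=> *; rewrite Rmult_assoc. Qed.
HB.instance Definition _ := isComLaw.Build R 0 Rplus RplusA' Rplus_comm Rplus_0_l.
HB.instance Definition _ := isComLaw.Build R 1 Rmult RmultA' Rmult_comm Rmult_1_l.
HB.instance Definition _ := isMulLaw.Build R 0 Rmult Rmult_0_l Rmult_0_r.
HB.instance Definition _ := isAddLaw.Build R Rmult Rplus
  Rmult_plus_distr_r Rmult_plus_distr_l.
End Inst.

Lemma rpow0 a : rpow 0 a = 0.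
Proof. by rewrite /rpow; case: Req_EM_T. Qed.

Lemma rpowE x a : 0 < x -> rpow x a = Rpower x a.
Proof. move=> hx; rewrite /rpow; case: Req_EM_T => // h; lra. Qed.

Lemma rpow_ge0 x a : 0 <= rpow x a.
Proof. rewrite /rpow; destruct (Req_EM_T x 0); simpl; [lra|]. left; apply: exp_pos. Qed.

Lemma rpow_gt0 x a : 0 < x -> 0 < rpow x a.
Proof. move=> hx; rewrite (rpowE x a hx); apply: exp_pos. Qed.

Lemma rpow_mul x y a : 0 <= x -> 0 <= y -> rpow (x * y) a = rpow x a * rpow y a.
Proof.
move=> hx hy; case: (Req_dec x 0) => [->|hx0]; first by rewrite Rmult_0_l !rpow0 Rmult_0_l.
case: (Req_dec y 0) => [->|hy0]; first by rewrite Rmult_0_r !rpow0 Rmult_0_r.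
have hx' : 0 < x by lra. have hy' : 0 < y by lra.
rewrite !rpowE //; last by apply: Rmult_lt_0_compat.
by rewrite Rpower_mult_distr.
Qed.

Lemma rpow_rpow x a b : 0 <= x -> rpow (rpow x a) b = rpow x (a * b).
Proof.
move=> hx; case: (Req_dec x 0) => [->|hx0]; first by rewrite !rpow0.
have hx' : 0 < x by lra.
rewrite (rpowE x a hx') rpowE ?Rpower_mult //; first by rewrite (rpowE x _ hx'). apply: exp_pos.
Qed.

Lemma rpow_plus x a b : 0 <= x -> rpow x (a + b) = rpow x a * rpow x b.
Proof.
move=> hx; case: (Req_dec x 0) => [->|hx0]; first by rewrite !rpow0 Rmult_0_l.
have hx' : 0 < x by lra.
by rewrite !rpowE // Rpower_plus.
Qed.

Lemma rpow_1 x : 0 <= x -> rpow x 1 = x.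
Proof.
move=> hx; case: (Req_dec x 0) => [->|hx0]; first by rewrite !rpow0.
have hx' : 0 < x by lra. by rewrite rpowE // Rpower_1.
Qed.

Lemma rpow_le x y a : 0 < a -> 0 <= x <= y -> rpow x a <= rpow y a.
Proof.
move=> ha [hx hxy]; case: (Req_dec x 0) => [->|hx0]; first by rewrite rpow0; apply: rpow_ge0.
have hx' : 0 < x by lra.
rewrite !rpowE //; last lra. apply: Rle_Rpower_l; lra.
Qed.

Lemma exp_convex r a : 0 <= r <= 1 -> exp (r * a) <= r * exp a + (1 - r).
Proof.
move=> hr.
have h1 : exp (r * a) * (1 + (a - r * a)) <= exp a.
  have -> : exp a = exp (r * a) * exp (a - r * a) by rewrite -exp_plus; f_equal; ring.
  apply: Rmult_le_compat_l; [left; apply: exp_pos|apply: exp_ineq1_le].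
have h2 : exp (r * a) * (1 + (0 - r * a)) <= 1.
  have e1 : exp (r * a) * exp (0 - r * a) = 1.
    rewrite -exp_plus. have -> : r * a + (0 - r * a) = 0 by ring. by rewrite exp_0.
  rewrite -[X in _ <= X]e1.
  apply: Rmult_le_compat_l; [left; apply: exp_pos|apply: exp_ineq1_le].
have e : exp (r * a) = r * (exp (r * a) * (1 + (a - r * a))) +
     (1 - r) * (exp (r * a) * (1 + (0 - r * a))) by ring.
rewrite e.
apply: Rplus_le_compat; first by apply: Rmult_le_compat_l; lra.
rewrite -[X in _ <= X]Rmult_1_r. apply: Rmult_le_compat_l; lra.
Qed.

Lemma tangent Z K rho : 0 <= Z -> 0 < K -> 0 < rho <= 1 ->
  rpow Z rho <= (1 - rho) * rpow K rho + rho * (rpow K rho / K) * Z.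
Proof.
move=> hZ hK hr.
have hKr := rpow_gt0 K rho hK.
case: (Req_dec Z 0) => [->|hZ0].
  rewrite rpow0; have : 0 <= (1 - rho) * rpow K rho by apply: Rmult_le_pos; lra.
  lra.
have hZ' : 0 < Z by lra.
have hu : 0 < Z / K by apply: Rdiv_lt_0_compat.
have hc := exp_convex rho (ln (Z / K)) (conj (Rlt_le _ _ (proj1 hr)) (proj2 hr)).
rewrite exp_ln // in hc.
have -> : rpow Z rho = rpow K rho * rpow (Z / K) rho.
  rewrite -rpow_mul; [|lra|lra].
  f_equal; field; lra.
rewrite (rpowE _ rho hu) /Rpower.
have -> : (1 - rho) * rpow K rho + rho * (rpow K rho / K) * Z =
   rpow K rho * (rho * (Z / K) + (1 - rho)) by field; lra.
apply: Rmult_le_compat_l; lra.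
Qed.

Lemma sum_le (I : Type) (r : seq I) (P : pred I) (F G : I -> R) :
  (forall i, P i -> F i <= G i) ->
  \big[Rplus/0]_(i <- r | P i) F i <= \big[Rplus/0]_(i <- r | P i) G i.
Proof.
move=> h; apply: (big_ind2 (fun a b => a <= b)); [lra| |exact: h].
by move=> ? ? ? ? ? ?; apply: Rplus_le_compat.
Qed.

Lemma sum_ge0 (I : Type) (r : seq I) (P : pred I) (F : I -> R) :
  (forall i, P i -> 0 <= F i) -> 0 <= \big[Rplus/0]_(i <- r | P i) F i.
Proof.
move=> h; apply: (big_ind (fun a => 0 <= a)); [lra| |exact: h].
by move=> ? ? ? ?; lra.
Qed.

Lemma sum_filter_le (I : finType) (P : pred I) (F : I -> R) :
  (forall i, 0 <= F i) ->
  \big[Rplus/0]_(i | P i) F i <= \big[Rplus/0]_(i : I) F i.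
Proof.
move=> h; rewrite big_mkcond /=; apply: sum_le => i _.
by case: (P i); [apply: Rle_refl|apply: h].
Qed.

Lemma term_le_sum (I : finType) (P : pred I) (F : I -> R) j :
  (forall i, 0 <= F i) -> P j -> F j <= \big[Rplus/0]_(i | P i) F i.
Proof.
move=> h hj; rewrite (bigD1 j) //=.
have := sum_ge0 _ (index_enum I) (fun i => P i && (i != j)) F (fun i _ => h i).
lra.
Qed.

Lemma sum_eq0_each (I : finType) (F : I -> R) :
  (forall i, 0 <= F i) -> \big[Rplus/0]_(i : I) F i <= 0 -> forall i, F i = 0.
Proof.
move=> h hs i; have := term_le_sum _ (fun _ => true) _ i h erefl.
have := h i; lra.
Qed.

Lemma sum_pos_ex (I : Type) (r : seq I) (F : I -> R) :
  0 < \big[Rplus/0]_(i <- r) F i -> exists i, 0 < F i.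
Proof.
elim: r => [|x r IH]; first by rewrite big_nil; lra.
rewrite big_cons => h.
case: (Rlt_dec 0 (F x)) => hx; first by exists x.
apply: IH; lra.
Qed.

Lemma bigmin_le_seq (I : eqType) (r : seq I) (F : I -> R) i :
  i \in r -> \big[Rmin/1]_(j <- r) F j <= F i.
Proof.
elim: r => [|x r IH] //; rewrite in_cons big_cons => /orP [/eqP ->|h].
  by apply: Rmin_l.
apply: Rle_trans (IH h); apply: Rmin_r.
Qed.

Lemma bigmin_le (I : finType) (F : I -> R) i :
  \big[Rmin/1]_(j : I) F j <= F i.
Proof. by apply: bigmin_le_seq; rewrite mem_index_enum. Qed.

Lemma ex_max (I : finType) (f : I -> R) (t0 : I) :
  exists m, forall m', f m' <= f m.
Proof.
suff [m hm] : exists m, forall m', m' \in enum I -> f m' <= f m.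
  by exists m => m'; apply: hm; rewrite mem_enum.
elim: (enum I) => [|x r [m IH]]; first by exists t0.
case: (Rle_dec (f x) (f m)) => hx.
  by exists m => m'; rewrite in_cons => /orP [/eqP ->|/IH].
exists x => m'; rewrite in_cons => /orP [/eqP ->|/IH]; lra.
Qed.

Lemma jensen_pow (I : finType) (a Z : I -> R) G K rho :
  (forall i, 0 <= a i) -> (forall i, 0 <= Z i) ->
  \big[Rplus/0]_(i : I) a i = G ->
  \big[Rplus/0]_(i : I) (a i * Z i) <= G * K -> 0 <= K -> 0 < rho <= 1 ->
  \big[Rplus/0]_(i : I) (a i * rpow (Z i) rho) <= G * rpow K rho.
Proof.
move=> ha hZ hG hGK hK hr.
case: (Req_dec K 0) => [K0|K0].
  subst K; rewrite Rmult_0_r in hGK.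
  have h0 := sum_eq0_each _ (fun i => a i * Z i) (fun i => Rmult_le_pos _ _ (ha i) (hZ i)) hGK.
  rewrite rpow0 Rmult_0_r big1; first lra.
  move=> i _; have := h0 i => /= /Rmult_integral [->|->]; first lra.
  by rewrite rpow0; lra.
have hK' : 0 < K by lra.
apply: Rle_trans (_ : \big[Rplus/0]_(i : I)
   (a i * ((1 - rho) * rpow K rho + rho * (rpow K rho / K) * Z i)) <= _).
  apply: sum_le => i _; apply: Rmult_le_compat_l => //; exact: tangent.
have -> : \big[Rplus/0]_(i : I)
   (a i * ((1 - rho) * rpow K rho + rho * (rpow K rho / K) * Z i)) =
   \big[Rplus/0]_(i : I) (a i) * ((1 - rho) * rpow K rho) +
   (rho * (rpow K rho / K)) * \big[Rplus/0]_(i : I) (a i * Z i).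
  rewrite big_distrl big_distrr -big_split /=; apply: eq_bigr => i _; ring.
rewrite hG.
have hKr := rpow_gt0 K rho hK'.
have h1 : 0 <= rho * (rpow K rho / K).
  apply: Rmult_le_pos; first lra. left; apply: Rdiv_lt_0_compat; lra.
have := Rmult_le_compat_l _ _ _ h1 hGK.
have -> : rho * (rpow K rho / K) * (G * K) = rho * rpow K rho * G by field; lra.
move=> h2. nra.
Qed.

Definition piX (M X : finType) (PX : X -> R) (e : {ffun M -> X}) :=
  \big[Rmult/1]_(m : M) PX (e m).
Arguments piX {M X} PX e.

Lemma piX_ge0 (M X : finType) (PX : X -> R) (e : {ffun M -> X}) :
  (forall x, 0 <= PX x) -> 0 <= @piX M X PX e.
Proof.
move=> h; apply: (big_ind (fun a => 0 <= a)); [lra| |by move=> i _; apply: h].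
by move=> ? ? ? ?; apply: Rmult_le_pos.
Qed.

Lemma sum_prod_gen (M X : finType) (PX : X -> R) (c : M -> X -> R) :
  \big[Rplus/0]_(e : {ffun M -> X}) (piX PX e * \big[Rmult/1]_(m : M) c m (e m)) =
  \big[Rmult/1]_(m : M) \big[Rplus/0]_(x : X) (PX x * c m x).
Proof.
rewrite bigA_distr_bigA; apply: eq_bigr => e _; rewrite /piX -big_split //.
Qed.

Lemma prod_if1 (M : finType) (m : M) (a : M -> R) :
  \big[Rmult/1]_(i : M) (if i == m then a i else 1) = a m.
Proof.
rewrite (bigD1 m) //= eqxx big1 ?Rmult_1_r // => i /= /negbTE -> //.
Qed.

Lemma prod_if2 (M : finType) (m m' : M) (a b : M -> R) : m' != m ->
  \big[Rmult/1]_(i : M) (if i == m then a i else if i == m' then b i else 1)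
  = a m * b m'.
Proof.
move=> hm.
rewrite (bigD1 m) //= eqxx (bigD1 m') //= eqxx (negbTE hm) big1 ?Rmult_1_r //.
by move=> i /= /andP [/negbTE -> /negbTE ->].
Qed.

Lemma sumPX1 (X : finType) (PX : X -> R) : is_distr PX ->
  \big[Rplus/0]_(x : X) (PX x * 1) = 1.
Proof. by move=> [_ h1]; rewrite (eq_bigr PX) // => x _; rewrite Rmult_1_r. Qed.

Lemma sumE1 (M X : finType) (PX : X -> R) (m : M) (f : X -> R) :
  is_distr PX ->
  \big[Rplus/0]_(e : {ffun M -> X}) (piX PX e * f (e m)) =
  \big[Rplus/0]_(x : X) (PX x * f x).
Proof.
move=> hPX.
have H := sum_prod_gen _ _ PX (fun i x => if i == m then f x else 1).
have e1 : \big[Rplus/0]_(e : {ffun M -> X}) (piX PX e * f (e m)) =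
  \big[Rplus/0]_(e : {ffun M -> X}) (piX PX e *
      \big[Rmult/1]_(i : M) (if i == m then f (e i) else 1)).
  by apply: eq_bigr => e _; rewrite (prod_if1 _ m (fun i => f (e i))).
rewrite e1 H.
rewrite (eq_bigr (fun i => if i == m then \big[Rplus/0]_(x : X) (PX x * f x) else 1)).
  by rewrite (prod_if1 _ m (fun _ => _)).
move=> i _; case: (i == m) => //; exact: sumPX1.
Qed.

Lemma sumE2 (M X : finType) (PX : X -> R) (m m' : M) (f h : X -> R) :
  is_distr PX -> m' != m ->
  \big[Rplus/0]_(e : {ffun M -> X}) (piX PX e * (f (e m) * h (e m'))) =
  \big[Rplus/0]_(x : X) (PX x * f x) * \big[Rplus/0]_(x : X) (PX x * h x).
Proof.
move=> hPX hm.
have H := sum_prod_gen _ _ PX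
  (fun i x => if i == m then f x else if i == m' then h x else 1).
have e1 : \big[Rplus/0]_(e : {ffun M -> X}) (piX PX e * (f (e m) * h (e m'))) =
  \big[Rplus/0]_(e : {ffun M -> X}) (piX PX e *
      \big[Rmult/1]_(i : M) (if i == m then f (e i) else if i == m' then h (e i) else 1)).
  by apply: eq_bigr => e _; rewrite (prod_if2 _ m m' (fun i => f (e i)) (fun i => h (e i)) hm).
rewrite e1 H.
rewrite (eq_bigr (fun i => if i == m then \big[Rplus/0]_(x : X) (PX x * f x)
   else if i == m' then \big[Rplus/0]_(x : X) (PX x * h x) else 1)).
  by rewrite (prod_if2 _ m m' (fun _ => _) (fun _ => _) hm).
move=> i _; case: (i == m) => //; case: (i == m') => //; exact: sumPX1.
Qed.

Section Main.
Variables (M X Y : finType) (PM : M -> R) (W : X -> Y -> R) (PX : X -> R) (s : R).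
Hypotheses (hPM : is_distr PM) (hW : is_channel W) (hPX : is_distr PX)
  (hs : 0 < s <= 1 / 2).

Definition rho := s / (1 - s).
Definition gY (y : Y) := \big[Rplus/0]_(x : X) (PX x * rpow (W x y) (1 - s)).
Definition A0 := \big[Rplus/0]_(m : M) rpow (PM m) (1 - s).
Definition Tm (e : {ffun M -> X}) (m : M) (y : Y) :=
  \big[Rplus/0]_(m' | m' != m) (rpow (PM m') (1 - s) * rpow (W (e m') y) (1 - s)).
Definition Bc (e : {ffun M -> X}) :=
  \big[Rplus/0]_(m : M) \big[Rplus/0]_(y : Y)
    (rpow (PM m) (1 - s) * rpow (W (e m) y) (1 - s) * rpow (Tm e m y) rho).

Lemma lam_pos0 : 0 < 1 - s. Proof. lra. Qed.

Lemma rho_pos : 0 < rho <= 1.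
Proof.
rewrite /rho; split; first by apply: Rdiv_lt_0_compat; lra.
have h : s <= 1 - s by lra. have h2 := Rmult_le_compat_r (/ (1 - s)) _ _ (Rlt_le _ _ (Rinv_0_lt_compat _ lam_pos0)) h.
rewrite Rinv_r in h2; lra.
Qed.

Lemma lam_pos : 0 < 1 - s. Proof. lra. Qed.

Lemma PM_ge0 m : 0 <= PM m. Proof. by case: hPM. Qed.
Lemma W_ge0 x y : 0 <= W x y. Proof. by case: (hW x). Qed.

Lemma Tm_ge0 e m y : 0 <= Tm e m y.
Proof.
apply: sum_ge0 => i _; apply: Rmult_le_pos; apply: rpow_ge0.
Qed.

Lemma step1 e : Pjs PM W <= Bc e.
Proof.
have [t0 _] : exists m, 0 < PM m.
  apply: (sum_pos_ex _ (index_enum M)); case: hPM => _ ->; lra.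
have [f hf] := @fin_all_exists Y (fun _ => M)
  (fun y m => forall m', PM m' * W (e m') y <= PM m * W (e m) y)
  (fun y => ex_max _ (fun m => PM m * W (e m) y) t0).
rewrite /Pjs; apply: Rle_trans (bigmin_le _ _ e) _.
apply: Rle_trans (bigmin_le _ _ (finfun f)) _.
rewrite /Pjs_code /Bc; apply: sum_le => m _.
rewrite big_distrr big_mkcond /=; apply: sum_le => y _.
rewrite ffunE; case: ifP => hdy; last first.
  apply: Rmult_le_pos; [apply: Rmult_le_pos|]; apply: rpow_ge0.
set a := PM m * W (e m) y.
have ha0 : 0 <= a by apply: Rmult_le_pos; [apply: PM_ge0|apply: W_ge0].
have ha : a = rpow a (1 - s) * rpow (rpow a (1 - s)) rho.
  rewrite rpow_rpow // -rpow_plus //.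
  have -> : 1 - s + (1 - s) * rho = 1 by rewrite /rho; field; lra.
  by rewrite rpow_1.
rewrite {1}ha rpow_mul; [|apply: PM_ge0|apply: W_ge0].
apply: Rmult_le_compat_l.
  apply: Rmult_le_pos; apply: rpow_ge0.
apply: rpow_le; first by case: rho_pos.
split; first by apply: Rmult_le_pos; apply: rpow_ge0.
rewrite -rpow_mul; [|apply: PM_ge0|apply: W_ge0].
apply: Rle_trans (_ : rpow (PM (f y) * W (e (f y)) y) (1 - s) <= _).
  apply: rpow_le; first exact: lam_pos.
  by split => //; apply: hf.
rewrite rpow_mul; [|apply: PM_ge0|apply: W_ge0].
apply: (term_le_sum _ (fun m' => m' != m)
  (fun m' => rpow (PM m') (1 - s) * rpow (W (e m') y) (1 - s))).
  by move=> i; apply: Rmult_le_pos; apply: rpow_ge0.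
by rewrite hdy.
Qed.


Lemma gY_ge0 y : 0 <= gY y.
Proof. apply: sum_ge0 => x _; apply: Rmult_le_pos; [by case: hPX|apply: rpow_ge0]. Qed.

Lemma A0_ge0 : 0 <= A0.
Proof. apply: sum_ge0 => x _; apply: rpow_ge0. Qed.

Lemma step3 m y :
  \big[Rplus/0]_(e : {ffun M -> X}) (piX PX e *
     (rpow (PM m) (1 - s) * rpow (W (e m) y) (1 - s) * rpow (Tm e m y) rho))
  <= rpow (PM m) (1 - s) * (gY y * rpow (A0 * gY y) rho).
Proof.
have -> : \big[Rplus/0]_(e : {ffun M -> X}) (piX PX e *
     (rpow (PM m) (1 - s) * rpow (W (e m) y) (1 - s) * rpow (Tm e m y) rho)) =
  rpow (PM m) (1 - s) * \big[Rplus/0]_(e : {ffun M -> X})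
     (piX PX e * rpow (W (e m) y) (1 - s) * rpow (Tm e m y) rho).
  rewrite big_distrr; apply: eq_bigr => e _ /=; ring.
apply: Rmult_le_compat_l; first by apply: rpow_ge0.
apply: (jensen_pow _ (fun e => piX PX e * rpow (W (e m) y) (1 - s))
  (fun e => Tm e m y) (gY y) (A0 * gY y) rho).
- move=> e; apply: Rmult_le_pos; [apply: piX_ge0; by case: hPX|apply: rpow_ge0].
- by move=> e; apply: Tm_ge0.
- exact (sumE1 _ _ PX m (fun x => rpow (W x y) (1 - s)) hPX).
- rewrite /Tm.
  have -> : \big[Rplus/0]_(e : {ffun M -> X})
    (piX PX e * rpow (W (e m) y) (1 - s) *
     \big[Rplus/0]_(m' | m' != m) (rpow (PM m') (1 - s) * rpow (W (e m') y) (1 - s)))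
    = \big[Rplus/0]_(e : {ffun M -> X}) \big[Rplus/0]_(m' | m' != m)
      (rpow (PM m') (1 - s) * (piX PX e * (rpow (W (e m) y) (1 - s) * rpow (W (e m') y) (1 - s)))).
    apply: eq_bigr => e _; rewrite big_distrr; apply: eq_bigr => m' _ /=; ring.
  rewrite exchange_big /=.
  have -> : \big[Rplus/0]_(m' | m' != m) \big[Rplus/0]_(e : {ffun M -> X})
      (rpow (PM m') (1 - s) * (piX PX e * (rpow (W (e m) y) (1 - s) * rpow (W (e m') y) (1 - s))))
    = \big[Rplus/0]_(m' | m' != m) (rpow (PM m') (1 - s) * (gY y * gY y)).
    apply: eq_bigr => m' hm'; rewrite -big_distrr /=; congr (_ * _).
    exact (sumE2 _ _ PX m m' (fun x => rpow (W x y) (1 - s)) (fun x => rpow (W x y) (1 - s)) hPX hm').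
  apply: Rle_trans (_ : \big[Rplus/0]_(m' : M) (rpow (PM m') (1 - s) * (gY y * gY y)) <= _).
    apply: sum_filter_le => i; apply: Rmult_le_pos; first by apply: rpow_ge0.
    apply: Rmult_le_pos; apply: gY_ge0.
  rewrite -big_distrl /= -/A0; have := gY_ge0 y; have := A0_ge0; nra.
- apply: Rmult_le_pos; [apply: A0_ge0|apply: gY_ge0].
- exact: rho_pos.
Qed.

Lemma main_bound :
  Pjs PM W <= A0 * \big[Rplus/0]_(y : Y) (gY y * rpow (A0 * gY y) rho).
Proof.
have [t0 _] : exists m, 0 < PM m.
  apply: (sum_pos_ex _ (index_enum M)); case: hPM => _ ->; lra.
have hsum : \big[Rplus/0]_(e : {ffun M -> X}) (piX PX e * 1) = 1.
  by rewrite (sumE1 _ _ PX t0 (fun _ => 1) hPX); apply: sumPX1.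
have -> : Pjs PM W = \big[Rplus/0]_(e : {ffun M -> X}) (piX PX e * Pjs PM W).
  rewrite -big_distrl /= (eq_bigr (fun e => piX PX e * 1)); last by move=> e _; ring.
  by rewrite hsum; ring.
apply: Rle_trans (_ : \big[Rplus/0]_(e : {ffun M -> X}) (piX PX e * Bc e) <= _).
  apply: sum_le => e _; apply: Rmult_le_compat_l; last exact: step1.
  by apply: piX_ge0; case: hPX.
have -> : \big[Rplus/0]_(e : {ffun M -> X}) (piX PX e * Bc e) =
  \big[Rplus/0]_(m : M) \big[Rplus/0]_(y : Y) \big[Rplus/0]_(e : {ffun M -> X}) (piX PX e *
     (rpow (PM m) (1 - s) * rpow (W (e m) y) (1 - s) * rpow (Tm e m y) rho)).
  rewrite /Bc.
  rewrite (eq_bigr (fun e => \big[Rplus/0]_(m : M) \big[Rplus/0]_(y : Y) (piX PX e *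
     (rpow (PM m) (1 - s) * rpow (W (e m) y) (1 - s) * rpow (Tm e m y) rho)))); last first.
    move=> e _; rewrite big_distrr; apply: eq_bigr => m _; by rewrite big_distrr.
  rewrite exchange_big; apply: eq_bigr => m _; by rewrite exchange_big.
apply: Rle_trans (_ : \big[Rplus/0]_(m : M) \big[Rplus/0]_(y : Y)
   (rpow (PM m) (1 - s) * (gY y * rpow (A0 * gY y) rho)) <= _).
  by apply: sum_le => m _; apply: sum_le => y _; apply: step3.
rewrite /A0 big_distrl; apply: Req_le; apply: eq_bigr => m _ /=.
by rewrite big_distrr.
Qed.

End Main.


Theorem mainTheorem3 (M X Y : finType) (PM : M -> R) (W : X -> Y -> R)
    (PX : X -> R) (s : R) :
  is_distr PM -> is_channel W -> is_distr PX ->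
  0 < s <= 1 / 2 ->
  Pjs PM W <= exp (s / (1 - s) * (H_renyi PM s - I_up PX W s)) /\
  exp (s / (1 - s) * (H_renyi PM s - I_up PX W s)) =
    rpow (\rsum_(m : M) rpow (PM m) (1 - s)) (/ (1 - s)) *
    \rsum_(y : Y) rpow (\rsum_(x : X) (PX x * rpow (W x y) (1 - s))) (/ (1 - s)).
Proof.
move=> hPM hW hPX hs.
have hmain := main_bound M X Y PM W PX s hPM hW hPX hs.
have [m0 hm0] : exists m, 0 < PM m.
  apply: (sum_pos_ex _ (index_enum M)); case: hPM => _ ->; lra.
have [x0 hx0] : exists x, 0 < PX x.
  apply: (sum_pos_ex _ (index_enum X)); case: hPX => _ ->; lra.
have [y0 hy0] : exists y, 0 < W x0 y.
  apply: (sum_pos_ex _ (index_enum Y)); case: (hW x0) => _ ->; lra.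
have hApos : 0 < A0 M PM s.
  apply: Rlt_le_trans (rpow_gt0 _ (1 - s) hm0) _.
  apply: (term_le_sum _ (fun _ => true) (fun m => rpow (PM m) (1 - s))) => // m.
  exact: rpow_ge0.
have hgpos : 0 < gY X Y W PX s y0.
  apply: Rlt_le_trans (_ : 0 < PX x0 * rpow (W x0 y0) (1 - s)) _.
    by apply: Rmult_lt_0_compat => //; apply: rpow_gt0.
  apply: (term_le_sum _ (fun _ => true) (fun x => PX x * rpow (W x y0) (1 - s))) => // x.
  by apply: Rmult_le_pos; [case: hPX|apply: rpow_ge0].
have hBpos : 0 < \rsum_(y : Y) rpow (gY X Y W PX s y) (/ (1 - s)).
  apply: Rlt_le_trans (rpow_gt0 _ (/ (1 - s)) hgpos) _.
  apply: (term_le_sum _ (fun _ => true) (fun y => rpow (gY X Y W PX s y) (/ (1 - s)))) => // y.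
  exact: rpow_ge0.
have eqexp : exp (s / (1 - s) * (H_renyi PM s - I_up PX W s)) =
    rpow (A0 M PM s) (/ (1 - s)) * \rsum_(y : Y) rpow (gY X Y W PX s y) (/ (1 - s)).
  rewrite /H_renyi /I_up -/(A0 M PM s).
  have -> : s / (1 - s) * (/ s * ln (A0 M PM s) - - ((1 - s) / s) *
      ln (\rsum_(y : Y) rpow (gY X Y W PX s y) (/ (1 - s)))) =
      / (1 - s) * ln (A0 M PM s) + ln (\rsum_(y : Y) rpow (gY X Y W PX s y) (/ (1 - s))).
    field; lra.
  by rewrite exp_plus exp_ln // rpowE.
split; last exact: eqexp.
rewrite eqexp; apply: Rle_trans hmain _; apply: Req_le.
have e : / (1 - s) = 1 + rho s by rewrite /rho; field; lra.
rewrite e rpow_plus ?rpow_1; try lra.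
rewrite !big_distrr; apply: eq_bigr => y _ /=.
have hg := gY_ge0 X Y W PX s hPX y.
rewrite (rpow_plus _ _ _ hg) (rpow_1 _ hg) (rpow_mul _ _ _ (A0_ge0 M PM s) hg); ring.
Qed.
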